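(* Let $\mu$ be a PU-monotone. If $A\in H_n$ and $B\in H_k$ are both neither positive semidefinite nor negative semidefinite and satisfy $\|A_+\|_\infty\geq\|B_+\|_\infty$ and $\|A_-\|_\infty\geq\|B_-\|_\infty$, then $\mu(A)\geq\mu(B)$. That is, restricted to non-definite matrices, $\mu$ is a non-decreasing function of both $\|A_+\|_\infty$ and $\|A_-\|_\infty$.
   Context: $H_n$ denotes the $n\times n$ complex Hermitian matrices. A linear map $\Phi:H_n\to H_k$ is PU if it maps positive semidefinite matrices to positive semidefinite matrices and $\Phi(\mathbb{1})=\mathbb{1}$. A function $\mu:\bigcup_{n\in\mathbb N}H_n\to\mathbb R$ is a PU-monotone if $\mu(\Phi(A))\leq\mu(A)$ for all $n,k$, all PU maps $\Phi:H_n\to H_k$ and all $A\in H_n$. Every $A$ decomposes uniquely as $A=A_+-A_-$ with $A_\pm$ positive semidefinite and $A_+A_-=0$. $\|\cdot\|_\infty$ is the operator norm. *)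

(* Defs.v *)
From HB Require Import structures.
From mathcomp Require Import all_boot all_order all_algebra.
From mathcomp Require Import classical_sets reals.
From mathcomp Require Import complex.
Set Implicit Arguments. Unset Strict Implicit. Unset Printing Implicit Defensive.
Import Order.TTheory GRing.Theory Num.Theory.
Local Open Scope ring_scope.
Local Open Scope classical_set_scope.

Section Defs.
Variable R : realType.
Local Notation C := (R[i]).

Definition adjmx m n (X : 'M[C]_(m, n)) : 'M[C]_(n, m) := map_mx (@conjc R) X^T.

Definition is_herm n (X : 'M[C]_n) : Prop := adjmx X = X.

Definition psd n (X : 'M[C]_n) : Prop :=
  is_herm X /\ forall v : 'cV[C]_n, 0 <= (adjmx v *m X *m v) 0 0.

Definition vnorm n (v : 'cV[C]_n) : R :=
  Num.sqrt (\sum_i (@complex.Re R (v i 0) ^+ 2 + @complex.Im R (v i 0) ^+ 2)).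

Definition opnorm m n (X : 'M[C]_(m, n)) : R :=
  sup [set vnorm (X *m v) | v in [set v : 'cV[C]_n | vnorm v <= 1]].

Definition posneg_decomp n (A Ap Am : 'M[C]_n) : Prop :=
  [/\ psd Ap, psd Am, A = Ap - Am & Ap *m Am = 0].

(* PU map H_n -> H_k, given as a map on all matrices whose restriction to
   Hermitian matrices is real-linear, lands in H_k, is positive and unital *)
Definition PU n k (Phi : 'M[C]_n -> 'M[C]_k) : Prop :=
  [/\ (forall X Y, is_herm X -> is_herm Y -> Phi (X + Y) = Phi X + Phi Y),
      (forall (r : R) X, is_herm X -> Phi (Complex r 0 *: X) = Complex r 0 *: Phi X),
      (forall X, is_herm X -> is_herm (Phi X)),
      (forall X, psd X -> psd (Phi X)) &
      Phi 1%:M = 1%:M].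

Definition PU_monotone (mu : forall n, 'M[C]_n -> R) : Prop :=
  forall n k (Phi : 'M[C]_n -> 'M[C]_k), PU Phi ->
    forall A : 'M[C]_n, is_herm A -> mu k (Phi A) <= mu n A.

End Defs.

(* Main.v *)
Require Import Defs.
From HB Require Import structures.
From mathcomp Require Import all_boot all_order all_algebra.
From mathcomp Require Import classical_sets reals.
From mathcomp Require Import complex.
From mathcomp Require Import boolp topology normedtype derive.
From mathcomp Require Import ring lra.
Import Order.TTheory GRing.Theory Num.Theory.
Import numFieldTopology.Exports.
Local Open Scope ring_scope.
Local Open Scope classical_set_scope.
Set Implicit Arguments. Unset Strict Implicit. Unset Printing Implicit Defensive.
Section Att.
Variable R : realType.

Definition sq {m} (x : 'rV[R]_m) : R := \sum_k x ord0 k ^+ 2.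

Lemma cont_sum m (I : Type) (s : seq I) (f : I -> 'rV[R]_m -> R) :
  (forall i, continuous (f i)) -> continuous (fun x => \sum_(i <- s) f i x).
Proof.
move=> fc; elim: s => [|a s IH].
  have -> : (fun x => \sum_(i <- [::]) f i x) = (fun=> 0) by apply: funext => x; rewrite big_nil.
  exact: cst_continuous.
have -> : (fun x => \sum_(i <- a :: s) f i x) = (fun x => f a x + \sum_(i <- s) f i x).
  by apply: funext => x; rewrite big_cons.
move=> x; exact: (@continuousD R R^o _ (f a) (fun x => \sum_(i <- s) f i x) x (fc a x) (IH x)).
Qed.

Lemma sq_cont m : continuous (@sq m).
Proof.
apply: cont_sum => i x; rewrite /GRing.exp /=.
by apply: continuousM; apply: coord_continuous.
Qed.

Lemma attain m (F : 'rV[R]_m -> R) : continuous F ->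
  exists c : 'rV[R]_m, sq c <= 1 /\ forall x, sq x <= 1 -> F x <= F c.
Proof.
move=> Fc.
pose S := [set x : 'rV[R]_m | sq x <= 1].
have S0 : S !=set0 by exists 0; rewrite /S /= /sq big1 // => i _; rewrite mxE expr0n.
have cS : compact S.
  apply: (@subclosed_compact _ S [set v : 'rV[R]_m | forall i, `[-1, 1]%classic (v ord0 i)]).
  - apply: (preimage_closed (f := @sq m) (D := [set y | y <= 1])); last exact: closed_le.
    by move=> x _; apply: sq_cont.
  - by apply: (@rV_compact R m (fun=> `[-1, 1]%classic)) => i; apply: segment_compact.
  - move=> x; rewrite /S /= => hx i; rewrite /= in_itv /= -ler_norml.
    rewrite -(@ler_pXn2r _ 2) ?nnegrE // expr1n real_normK ?num_real //.
    apply: le_trans hx; rewrite /sq (bigD1 i) //= lerDl.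
    by apply: sumr_ge0 => j _; rewrite sqr_ge0.
have [c cSc cmax] := EVT_max_rV S0 cS (continuous_subspaceT Fc).
exists c; split; first by move: cSc; rewrite inE.
by move=> x hx; apply: cmax; rewrite inE.
Qed.
End Att.
Local Open Scope ring_scope.
Local Open Scope complex_scope.
Section Alg.
Variable R : realType.
Local Notation C := R[i].

Lemma adjmxK m n (X : 'M[C]_(m, n)) : adjmx (adjmx X) = X.
Proof. by apply/matrixP => i j; rewrite !mxE conjcK. Qed.

Lemma adjmxM m n p (X : 'M[C]_(m, n)) (Y : 'M[C]_(n, p)) :
  adjmx (X *m Y) = adjmx Y *m adjmx X.
Proof.
apply/matrixP => i j; rewrite !mxE rmorph_sum; apply: eq_bigr => l _.
by rewrite !mxE rmorphM mulrC.
Qed.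

Lemma adjmxD m n (X Y : 'M[C]_(m, n)) : adjmx (X + Y) = adjmx X + adjmx Y.
Proof. by apply/matrixP => i j; rewrite !mxE rmorphD. Qed.

Lemma adjmxN m n (X : 'M[C]_(m, n)) : adjmx (- X) = - adjmx X.
Proof. by apply/matrixP => i j; rewrite !mxE rmorphN. Qed.

Lemma adjmxZ m n a (X : 'M[C]_(m, n)) : adjmx (a *: X) = (a^*)%C *: adjmx X.
Proof. by apply/matrixP => i j; rewrite !mxE rmorphM. Qed.

Lemma adjmx1 m : adjmx (1%:M : 'M[C]_m) = 1%:M.
Proof.
apply/matrixP => i j; rewrite !mxE eq_sym.
by rewrite conjc_nat.
Qed.

Lemma adjmx0 m n : adjmx (0 : 'M[C]_(m, n)) = 0.
Proof. by apply/matrixP => i j; rewrite !mxE conjc0. Qed.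

Lemma adjmx_real m n (a : R) (X : 'M[C]_(m, n)) : adjmx (a%:C *: X) = a%:C *: adjmx X.
Proof. by rewrite adjmxZ conjc_real. Qed.

Definition bil n (X : 'M[C]_n) (v w : 'cV[C]_n) : C := (adjmx v *m X *m w) 0 0.
Definition qf n (X : 'M[C]_n) v := bil X v v.
Definition qr n (X : 'M[C]_n) v : R := complex.Re (qf X v).
Definition Nv n (v : 'cV[C]_n) : R := \sum_i (complex.Re (v i 0) ^+ 2 + complex.Im (v i 0) ^+ 2).

Lemma adj11 (x : 'M[C]_1) : adjmx x 0 0 = ((x 0 0)^*)%C.
Proof. by rewrite !mxE. Qed.

Lemma bil_conj n (X : 'M[C]_n) v w : is_herm X -> ((bil X v w)^*)%C = bil X w v.
Proof.
move=> hX; rewrite /bil -adj11 !adjmxM adjmxK hX mulmxA //.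
Qed.

Lemma conj_real (x : C) : (x^*)%C = x -> x = (complex.Re x)%:C.
Proof.
case: x => a b /= [] h; congr Complex.
have : b + b = 0 by rewrite -{1}h addNr.
move=> hb; lra.
Qed.

Lemma qf_real n (X : 'M[C]_n) v : is_herm X -> qf X v = (qr X v)%:C.
Proof. by move=> hX; apply: conj_real; rewrite /qf bil_conj. Qed.

Lemma psd_qf n (X : 'M[C]_n) v : psd X -> qf X v = (qr X v)%:C /\ 0 <= qr X v.
Proof.
case=> hX hv; have e := qf_real v hX; split => //.
by have := hv v; rewrite -/(bil X v v) -/(qf X v) e lecR.
Qed.

Lemma qf1 n (v : 'cV[C]_n) : qf 1%:M v = (Nv v)%:C.
Proof.
rewrite /qf /bil mulmx1 !mxE rmorph_sum; apply: eq_bigr => i _.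
rewrite !mxE; case: (v i 0) => a b /=; simpc.
by rewrite -!expr2 [b * a]mulrC subrr.
Qed.

Lemma bilDm n (X Y : 'M[C]_n) v w : bil (X + Y) v w = bil X v w + bil Y v w.
Proof. by rewrite /bil mulmxDr mulmxDl mxE. Qed.
Lemma bilNm n (X : 'M[C]_n) v w : bil (- X) v w = - bil X v w.
Proof. by rewrite /bil mulmxN mulNmx mxE. Qed.
Lemma bilZm n (X : 'M[C]_n) a v w : bil (a *: X) v w = a * bil X v w.
Proof. by rewrite /bil -scalemxAr -scalemxAl mxE. Qed.
Lemma bilDl n (X : 'M[C]_n) v v' w : bil X (v + v') w = bil X v w + bil X v' w.
Proof. by rewrite /bil adjmxD !mulmxDl mxE. Qed.
Lemma bilDr n (X : 'M[C]_n) v w w' : bil X v (w + w') = bil X v w + bil X v w'.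
Proof. by rewrite /bil mulmxDr mxE. Qed.
Lemma bilZl n (X : 'M[C]_n) a v w : bil X (a *: v) w = a^* * bil X v w.
Proof. by rewrite /bil adjmxZ -!scalemxAl mxE. Qed.
Lemma bilZr n (X : 'M[C]_n) a v w : bil X v (a *: w) = a * bil X v w.
Proof. by rewrite /bil -scalemxAr mxE. Qed.
Lemma bilMr n (X Y : 'M[C]_n) v w : bil X v (Y *m w) = bil (X *m Y) v w.
Proof. by rewrite /bil !mulmxA. Qed.
Lemma bilMl n (X Y : 'M[C]_n) v w : bil X (Y *m v) w = bil (adjmx Y *m X) v w.
Proof. by rewrite /bil adjmxM !mulmxA. Qed.
Lemma bil0r n (X : 'M[C]_n) v : bil X v 0 = 0.
Proof. by rewrite /bil mulmx0 mxE. Qed.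
Lemma bil0l n (X : 'M[C]_n) w : bil X 0 w = 0.
Proof. by rewrite /bil adjmx0 !mul0mx mxE. Qed.

Lemma ReM_real (s : R) (x : C) : complex.Re (s%:C * x) = s * complex.Re x.
Proof. by case: x => a b /=; rewrite mul0r subr0. Qed.

Lemma qrZ n (X : 'M[C]_n) (s : R) v : qr X (s%:C *: v) = s ^+ 2 * qr X v.
Proof.
rewrite /qr /qf bilZl bilZr; move: (bil X v v) => [a b] /=; ring.
Qed.

Lemma Nv_qr n (v : 'cV[C]_n) : Nv v = qr 1%:M v.
Proof. by rewrite /qr qf1. Qed.

Lemma Nv_ge0 n (v : 'cV[C]_n) : 0 <= Nv v.
Proof. by apply: sumr_ge0 => i _; apply: addr_ge0; apply: sqr_ge0. Qed.

Lemma Nv_eq0 n (v : 'cV[C]_n) : Nv v = 0 -> v = 0.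
Proof.
move=> /eqP; rewrite psumr_eq0; last by move=> i _; apply: addr_ge0; apply: sqr_ge0.
move=> /allP h; apply/matrixP => i j; rewrite (ord1 j) mxE.
have /h /= : i \in index_enum 'I_n by rewrite mem_index_enum.
rewrite paddr_eq0 ?sqr_ge0 // !sqrf_eq0; case/andP => /eqP ha /eqP hb.
by move: (v i 0) ha hb => [a b] /= -> ->.
Qed.

Lemma NvZ n (s : R) (v : 'cV[C]_n) : Nv (s%:C *: v) = s ^+ 2 * Nv v.
Proof. by rewrite !Nv_qr qrZ. Qed.

Lemma vnormE n (v : 'cV[C]_n) : vnorm v = Num.sqrt (Nv v).
Proof. by []. Qed.

Lemma disc (a b c : R) : 0 <= c ->
  (forall t, 0 <= a + t * (2 * b) + t ^+ 2 * c) -> b ^+ 2 <= a * c.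
Proof.
move=> c0 h; have [c00|cp] := eqVneq c 0.
  subst c; have [b0|bn] := eqVneq b 0; first by subst b; rewrite expr0n mulr0.
  have := h (- (a + 1) / (2 * b)).
  have -> : - (a + 1) / (2 * b) * (2 * b) = - (a + 1).
    by field.
  move=> hh; exfalso; lra.
have cpos : 0 < c by rewrite lt0r cp.
have := h (- b / c).
have -> : a + - b / c * (2 * b) + (- b / c) ^+ 2 * c = a - b ^+ 2 / c.
  by field.
rewrite subr_ge0 ler_pdivrMr //; lra.
Qed.

Lemma CS n (Q : 'M[C]_n) v w : psd Q ->
  (complex.Re (bil Q v w)) ^+ 2 <= qr Q v * qr Q w.
Proof.
move=> hQ; apply: disc; first by case: (psd_qf w hQ).
move=> t; case: (psd_qf (v + t%:C *: w) hQ) => _.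
rewrite /qr /qf !bilDl !bilDr !bilZl !bilZr.
rewrite -(bil_conj v w (proj1 hQ)).
move: (bil Q v w) (bil Q v v) (bil Q w w) => [a b] [c d] [e f] /=.
rewrite /=; nra.
Qed.

Lemma ReD (x y : C) : complex.Re (x + y) = complex.Re x + complex.Re y.
Proof. by case: x y => [a b] [c d]. Qed.
Lemma ReN (x : C) : complex.Re (- x) = - complex.Re x.
Proof. by case: x => [a b]. Qed.

Lemma qrD n (X Y : 'M[C]_n) v : qr (X + Y) v = qr X v + qr Y v.
Proof. by rewrite /qr /qf bilDm ReD. Qed.
Lemma qrN n (X : 'M[C]_n) v : qr (- X) v = - qr X v.
Proof. by rewrite /qr /qf bilNm ReN. Qed.
Lemma qr0 n (X : 'M[C]_n) : qr X 0 = 0.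
Proof. by rewrite /qr /qf bil0l. Qed.
Lemma Nv0 n : Nv (0 : 'cV[C]_n) = 0.
Proof. by rewrite Nv_qr qr0. Qed.

Lemma vnorm_le1 n (v : 'cV[C]_n) : (vnorm v <= 1) = (Nv v <= 1).
Proof. by rewrite vnormE -{1}sqrtr1 ler_sqrt. Qed.

Lemma vnormZ n (s : R) (v : 'cV[C]_n) : 0 <= s -> vnorm (s%:C *: v) = s * vnorm v.
Proof.
by move=> s0; rewrite !vnormE NvZ sqrtrM ?sqr_ge0 // sqrtr_sqr ger0_norm.
Qed.

Lemma vnorm_sq n (v : 'cV[C]_n) : vnorm v ^+ 2 = Nv v.
Proof. by rewrite vnormE sqr_sqrtr // Nv_ge0. Qed.

Lemma unitize n (X : 'M[C]_n) u : 0 < qr X u -> Nv u <= 1 ->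
  exists u', Nv u' = 1 /\ qr X u <= qr X u'.
Proof.
move=> q0 u1.
have Nu0 : 0 < Nv u.
  rewrite lt0r Nv_ge0 andbT; apply/eqP => /Nv_eq0 e.
  by move: q0; rewrite e qr0 ltxx.
have r0 : 0 < vnorm u by rewrite vnormE sqrtr_gt0.
exists ((vnorm u)^-1%:C *: u); rewrite NvZ qrZ exprVn vnorm_sq mulVf ?gt_eqF //.
by split => //; rewrite mulrC ler_pdivlMr // ler_piMr // ltW.
Qed.

Lemma opn_ub n (X : 'M[C]_n) M :
  (forall v, Nv v <= 1 -> vnorm (X *m v) <= M) -> opnorm X <= M.
Proof.
move=> h; apply: ge_sup.
  by exists (vnorm (X *m 0)); exists 0 => //=; rewrite vnorm_le1 Nv0.
by move=> _ [v /= hv <-]; apply: h; rewrite -vnorm_le1.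
Qed.

Lemma opn_ge n (X : 'M[C]_n) M :
  (forall v, Nv v <= 1 -> vnorm (X *m v) <= M) ->
  forall v, Nv v <= 1 -> vnorm (X *m v) <= opnorm X.
Proof.
move=> h v hv; apply: ub_le_sup.
  by exists M => _ [w /= hw <-]; apply: h; rewrite -vnorm_le1.
by exists v => //=; rewrite vnorm_le1.
Qed.

Lemma opn_scale n (X : 'M[C]_n) M :
  (forall v, Nv v <= 1 -> vnorm (X *m v) <= M) ->
  forall v, vnorm (X *m v) <= opnorm X * vnorm v.
Proof.
move=> h v; have [e|ne] := eqVneq (Nv v) 0.
  by rewrite (Nv_eq0 e) mulmx0 !vnormE Nv0 sqrtr0 mulr0.
have Nu0 : 0 < Nv v by rewrite lt0r ne Nv_ge0.
have r0 : 0 < vnorm v by rewrite vnormE sqrtr_gt0.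
have hh : Nv ((vnorm v)^-1%:C *: v) <= 1.
  by rewrite NvZ exprVn vnorm_sq mulVf.
have := opn_ge h hh.
rewrite -scalemxAr vnormZ => [hle|]; last by rewrite invr_ge0 ltW.
have -> : vnorm (X *m v) = vnorm v * ((vnorm v)^-1 * vnorm (X *m v)).
  by rewrite mulrA mulfV ?gt_eqF ?mul1r.
by rewrite [opnorm X * _]mulrC ler_wpM2l // ltW.
Qed.

Lemma key n (A P N : 'M[C]_n) (M : R) : psd P -> psd N -> A = P - N -> N *m P = 0 ->
  (forall x, Nv x <= 1 -> qr A x <= M) ->
  forall v, Nv v <= 1 -> vnorm (P *m v) <= M.
Proof.
move=> hP hN eA eNP hM v hv.
have M0 : 0 <= M by have := hM 0; rewrite qr0 Nv0 ler01 => /(_ isT).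
have [e|ne] := eqVneq (Nv (P *m v)) 0; first by rewrite vnormE e sqrtr0.
have Nu0 : 0 < Nv (P *m v) by rewrite lt0r ne Nv_ge0.
set r := vnorm (P *m v).
have r0 : 0 < r by rewrite /r vnormE sqrtr_gt0.
have hPh : adjmx P = P := proj1 hP.
have e1 : r ^+ 2 = complex.Re (bil P v (P *m v)).
  by rewrite vnorm_sq Nv_qr /qr /qf bilMl mulmx1 hPh.
have e2 : complex.Re (bil 1%:M v (P *m v)) = qr P v.
  by rewrite bilMr mul1mx.
have psd1 : psd (1%:M : 'M[C]_n).
  split; first exact: adjmx1.
  by move=> w; rewrite -/(bil _ w w) -/(qf _ w) qf1 lecR Nv_ge0.
have cs1 := CS v (P *m v) psd1.
rewrite e2 -!Nv_qr -[Nv (P *m v)]vnorm_sq -/r in cs1.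
have cs2 := CS v (P *m v) hP.
rewrite -e1 in cs2.
have [_ qv0] := psd_qf v hP.
have [_ qPv0] := psd_qf (P *m v) hP.
have Nv1 : Nv v * r ^+ 2 <= r ^+ 2 by rewrite ler_piMl ?sqr_ge0.
have qvr : qr P v <= r.
  have : qr P v ^+ 2 <= r ^+ 2 by apply: (le_trans cs1).
  move=> hq; nra.
have h3 : r ^+ 3 <= qr P (P *m v).
  have : r ^+ 4 <= r * qr P (P *m v).
    rewrite (_ : 4 = 2 * 2)%N // exprM; apply: le_trans cs2 _.
    by rewrite ler_wpM2r.
  by rewrite (_ : 4 = 1 + 3)%N // exprD expr1 ler_pM2l.
set u := r^-1%:C *: (P *m v).
have Nu : Nv u <= 1.
  by rewrite /u NvZ exprVn -/r vnorm_sq mulVf.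
have := hM u Nu.
rewrite eA qrD qrN /u !qrZ.
have -> : qr N (P *m v) = 0.
  by rewrite /qr /qf bilMr eNP /bil mulmx0 mul0mx mxE.
rewrite mulr0 oppr0 addr0; apply: le_trans.
rewrite exprVn ler_pdivlMl ?exprn_gt0 //.
by rewrite -exprSr.
Qed.

Section Cont.
Variable m : nat.
Implicit Types f g : 'rV[R]_m -> R.
Lemma contD f g : continuous f -> continuous g -> continuous (fun x => f x + g x).
Proof. by move=> hf hg x; exact: (@continuousD R R^o _ f g x (hf x) (hg x)). Qed.
Lemma contM f g : continuous f -> continuous g -> continuous (fun x => f x * g x).
Proof. by move=> hf hg x; exact (continuousM (s:=f) (t:=g) (hf x) (hg x)). Qed.
Lemma contN f : continuous f -> continuous (fun x => - f x).
Proof. by move=> hf x; exact: (@continuousN R R^o _ f x (hf x)). Qed.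
Lemma contc (a : R) : continuous (fun _ : 'rV[R]_m => a).
Proof. exact: cst_continuous. Qed.
Lemma contx k : continuous (fun x : 'rV[R]_m => x ord0 k).
Proof. exact: coord_continuous. Qed.
End Cont.

Definition toC n (x : 'rV[R]_(n + n)) : 'cV[C]_n :=
  \col_i ((x ord0 (lshift n i)) +i* (x ord0 (rshift n i))).
Definition ofC n (v : 'cV[C]_n) : 'rV[R]_(n + n) :=
  row_mx (\row_i complex.Re (v i 0)) (\row_i complex.Im (v i 0)).

Lemma toCK n (v : 'cV[C]_n) : toC (ofC v) = v.
Proof.
apply/matrixP => i j; rewrite (ord1 j) !mxE (unsplitK (inl _ i)) (unsplitK (inr _ i)) !mxE.
by case: (v i 0).
Qed.

Lemma sq_toC n (x : 'rV[R]_(n + n)) : sq x = Nv (toC x).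
Proof.
rewrite /sq /Nv big_split_ord /= [in RHS]big_split /=.
by congr (_ + _); apply: eq_bigr => i _; rewrite /toC !mxE.
Qed.

Lemma Re_sum (I : Type) (s : seq I) (F : I -> C) :
  complex.Re (\sum_(i <- s) F i) = \sum_(i <- s) complex.Re (F i).
Proof.
elim: s => [|a s IH]; first by rewrite !big_nil.
by rewrite !big_cons ReD IH.
Qed.

Lemma qr_expand n (A : 'M[C]_n) (v : 'cV[C]_n) :
  qr A v = \sum_j \sum_i complex.Re ((v i 0)^* * A i j * v j 0).
Proof.
rewrite /qr /qf /bil mxE Re_sum; apply: eq_bigr => j _.
by rewrite mxE big_distrl Re_sum; apply: eq_bigr => i _; rewrite !mxE.
Qed.

Lemma qr_cont n (A : 'M[C]_n) : continuous (fun x : 'rV[R]_(n + n) => qr A (toC x)).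
Proof.
have -> : (fun x : 'rV[R]_(n + n) => qr A (toC x)) = (fun x =>
   \sum_j \sum_i complex.Re (((toC x) i 0)^* * A i j * (toC x) j 0)).
  by apply: funext => x; rewrite qr_expand.
apply: cont_sum => j; apply: cont_sum => i.
pose p i (x : 'rV[R]_(n + n)) := x ord0 (lshift n i).
pose r i (x : 'rV[R]_(n + n)) := x ord0 (rshift n i).
have -> : (fun x : 'rV[R]_(n + n) => complex.Re (((toC x) i 0)^* * A i j * (toC x) j 0)) =
  (fun x => (p i x * complex.Re (A i j) + r i x * complex.Im (A i j)) * p j x
          + - ((p i x * complex.Im (A i j) + - (r i x * complex.Re (A i j))) * r j x)).
  apply: funext => x; rewrite !mxE /p /r.
  case: (A i j) => a b /=; ring.
set a := complex.Re (A i j); set b := complex.Im (A i j).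
have cpi : continuous (p i) := @contx _ (lshift n i).
have cpj : continuous (p j) := @contx _ (lshift n j).
have cri : continuous (r i) := @contx _ (rshift n i).
have crj : continuous (r j) := @contx _ (rshift n j).
have c1 := contM cpi (@contc _ a).
have c2 := contM cri (@contc _ b).
have c3 := contM (contD c1 c2) cpj.
have c5 := contM cpi (@contc _ b).
have c6 := contN (contM cri (@contc _ a)).
have c7 := contN (contM (contD c5 c6) crj).
exact (contD c3 c7).
Qed.

Lemma attainC n (A : 'M[C]_n) :
  exists u, Nv u <= 1 /\ forall v, Nv v <= 1 -> qr A v <= qr A u.
Proof.
have [c [c1 cmax]] := attain (@qr_cont n A).
exists (toC c); split; first by rewrite -sq_toC.
move=> v hv; rewrite -(toCK v); apply: cmax.
by rewrite sq_toC toCK.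
Qed.

Lemma psd1 n : psd (1%:M : 'M[C]_n).
Proof.
split; first exact: adjmx1.
by move=> w; rewrite -/(bil _ w w) -/(qf _ w) qf1 lecR Nv_ge0.
Qed.

Lemma psd0 n : psd (0 : 'M[C]_n).
Proof.
split; first exact: adjmx0.
by move=> w; rewrite mulmx0 mul0mx mxE.
Qed.

Lemma unitize2 n (X : 'M[C]_n) u : 0 < qr X u ->
  exists u', Nv u' = 1 /\ qr X u' = qr X u / Nv u.
Proof.
move=> q0.
have Nu0 : 0 < Nv u.
  rewrite lt0r Nv_ge0 andbT; apply/eqP => /Nv_eq0 e.
  by move: q0; rewrite e qr0 ltxx.
have r0 : 0 < vnorm u by rewrite vnormE sqrtr_gt0.
exists ((vnorm u)^-1%:C *: u); rewrite NvZ qrZ exprVn vnorm_sq mulVf ?gt_eqF //.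
by rewrite mulrC.
Qed.

Lemma notpsd n (X : 'M[C]_n) : is_herm X -> ~ psd X -> exists v, qr X v < 0.
Proof.
move=> hX np; case: (pselect (exists v, qr X v < 0)) => // hno; exfalso.
apply: np; split => // v.
rewrite -/(bil X v v) -/(qf X v) (qf_real v hX) lecR leNgt; apply/negP => hlt.
by apply: hno; exists v.
Qed.

Lemma qr_le_opn n (X : 'M[C]_n) M :
  (forall v, Nv v <= 1 -> vnorm (X *m v) <= M) ->
  forall v, qr X v <= opnorm X * Nv v.
Proof.
move=> h v.
have cs := CS v (X *m v) (@psd1 n).
rewrite bilMr mul1mx -/(qf X v) -/(qr X v) -!Nv_qr in cs.
have o0 : 0 <= opnorm X.
  by apply: le_trans (opn_ge h (v := 0) _); rewrite ?Nv0 ?ler01 // mulmx0 vnormE Nv0 sqrtr0.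
have hs := opn_scale h v.
have hN : Nv (X *m v) <= opnorm X ^+ 2 * Nv v.
  rewrite -vnorm_sq -(vnorm_sq v) -exprMn lerXn2r ?nnegrE ?mulr_ge0 ?vnormE ?sqrtr_ge0 //.
have N0 := Nv_ge0 v.
have : qr X v ^+ 2 <= (opnorm X * Nv v) ^+ 2.
  apply: le_trans cs _.
  have -> : (opnorm X * Nv v) ^+ 2 = Nv v * (opnorm X ^+ 2 * Nv v).
    by ring.
  by rewrite ler_wpM2l.
move=> hq; have p0 : 0 <= opnorm X * Nv v by rewrite mulr_ge0.
nra.
Qed.
End Alg.


Lemma le_divN (R : realType) (a N : R) : 0 < a -> 0 < N -> N <= 1 -> a <= a / N.
Proof.
move=> a0 N0 N1; rewrite ler_pdivlMr //.
by rewrite ler_piMr // ltW.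
Qed.

Lemma ge0_divsub (R : realType) (d x y : R) : 0 < d -> y <= x -> 0 <= d^-1 * (x - y).
Proof. by move=> d0 yx; rewrite mulr_ge0 // ?invr_ge0 ?subr_ge0 // ltW. Qed.

Local Open Scope complex_scope.

Theorem mainTheorem10 (R : realType) (mu : forall n, 'M[R[i]]_n -> R)
  (hmu : PU_monotone mu) (n k : nat) (A Ap Am : 'M[R[i]]_n) (B Bp Bm : 'M[R[i]]_k) :
  is_herm A -> is_herm B ->
  ~ psd A -> ~ psd (- A) -> ~ psd B -> ~ psd (- B) ->
  posneg_decomp A Ap Am -> posneg_decomp B Bp Bm ->
  opnorm Bp <= opnorm Ap -> opnorm Bm <= opnorm Am ->
  mu k B <= mu n A.
Proof.
move=> hA hB nA nAm nB nBm [hAp hAm eA eApm] [hBp hBm eB eBpm] hp hm.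
have eAmp : Am *m Ap = 0.
  by rewrite -[Am *m Ap]adjmxK adjmxM (proj1 hAp) (proj1 hAm) eApm adjmx0.
have eA' : - A = Am - Ap by rewrite eA opprB.
have hAn : is_herm (- A) by rewrite /is_herm adjmxN hA.
have [u [u1 umax]] := attainC A.
have [w [w1 wmax]] := attainC (- A).
have kA := key hAp hAm eA eAmp umax.
have kAm := key hAm hAp eA' eApm wmax.
have [b1 [_ b1max]] := attainC Bp.
have [b2 [_ b2max]] := attainC Bm.
have kBp := key hBp (@psd0 _ k) (esym (subr0 Bp)) (mul0mx _ Bp) b1max.
have kBm := key hBm (@psd0 _ k) (esym (subr0 Bm)) (mul0mx _ Bm) b2max.
have oAp := opn_ub kA.
have oAm := opn_ub kAm.
have [v1 v1p] := notpsd hAn nAm.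
rewrite qrN oppr_lt0 in v1p.
have [v2 v2p] := notpsd hA nA.
rewrite -[qr A v2]opprK -qrN oppr_lt0 in v2p.
have [v1' [v1'1 v1'e]] := unitize2 v1p.
have [v2' [v2'1 v2'e]] := unitize2 v2p.
have Nv1 : 0 < Nv v1.
  rewrite lt0r Nv_ge0 andbT; apply/eqP => /Nv_eq0 e.
  by move: v1p; rewrite e qr0 ltxx.
have Nv2 : 0 < Nv v2.
  rewrite lt0r Nv_ge0 andbT; apply/eqP => /Nv_eq0 e.
  by move: v2p; rewrite e qr0 ltxx.
have up : 0 < qr A u.
  apply: lt_le_trans (umax v1' _); last by rewrite v1'1.
  by rewrite v1'e divr_gt0.
have wp : 0 < qr (- A) w.
  apply: lt_le_trans (wmax v2' _); last by rewrite v2'1.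
  by rewrite v2'e divr_gt0.
have [u' [u'1 u'e]] := unitize2 up.
have [w' [w'1 w'e]] := unitize2 wp.
have Nu0 : 0 < Nv u.
  rewrite lt0r Nv_ge0 andbT; apply/eqP => /Nv_eq0 e.
  by move: up; rewrite e qr0 ltxx.
have Nw0 : 0 < Nv w.
  rewrite lt0r Nv_ge0 andbT; apply/eqP => /Nv_eq0 e.
  by move: wp; rewrite e qr0 ltxx.
set al := qr A u'.
set be := qr A w'.
have alu : qr A u <= al.
  by rewrite /al u'e; exact: le_divN.
have bew : qr (- A) w <= - be.
  by rewrite /be -qrN w'e; exact: le_divN.
have hBp1 : opnorm Bp <= al by apply: le_trans hp (le_trans oAp alu).
have hBm1 : opnorm Bm <= - be by apply: le_trans hm (le_trans oAm bew).
have alp : 0 < al by apply: lt_le_trans alu.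
have bep : be < 0 by rewrite -oppr_gt0; apply: lt_le_trans bew.
have hlow : forall v, be * Nv v <= qr B v.
  move=> v; rewrite eB qrD qrN.
  have [_ q1] := psd_qf v hBp.
  have q2 := qr_le_opn kBm v.
  have q3 : opnorm Bm * Nv v <= - be * Nv v by rewrite ler_wpM2r ?Nv_ge0.
  rewrite mulNr in q3; clear -q1 q2 q3; lra.
have hup : forall v, qr B v <= al * Nv v.
  move=> v; rewrite eB qrD qrN.
  have [_ q1] := psd_qf v hBm.
  have q2 := qr_le_opn kBp v.
  have q3 : opnorm Bp * Nv v <= al * Nv v by rewrite ler_wpM2r ?Nv_ge0.
  clear -q1 q2 q3; lra.
set d := al - be.
have dp : 0 < d by rewrite /d subr_gt0; apply: lt_trans alp.
pose Pm := (d^-1)%:C *: (B - be%:C *: 1%:M).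
pose Qm := (d^-1)%:C *: (al%:C *: 1%:M - B).
have hPm : psd Pm.
  split.
    by rewrite /Pm /is_herm adjmx_real adjmxD adjmxN adjmx_real adjmx1 hB.
  move=> v; rewrite -/(bil Pm v v) /Pm bilZm bilDm bilNm bilZm.
  rewrite -/(qf B v) -/(qf 1%:M v) (qf_real v hB) qf1 -!rmorphM -rmorphB -rmorphM lecR.
  exact: ge0_divsub.
have hQm : psd Qm.
  split.
    by rewrite /Qm /is_herm adjmx_real adjmxD adjmxN adjmx_real adjmx1 hB.
  move=> v; rewrite -/(bil Qm v v) /Qm bilZm bilDm bilNm bilZm.
  rewrite -/(qf B v) -/(qf 1%:M v) (qf_real v hB) qf1 -!rmorphM -rmorphB -rmorphM lecR.
  exact: ge0_divsub.
have dC : (d%:C : R[i]) != 0.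
  apply/eqP => /(congr1 (@complex.Re R)) /= d0.
  by move: dp; rewrite d0 ltxx.
have dn0 : d != 0 := lt0r_neq0 dp.
have hPQ1 : Pm + Qm = 1%:M.
  rewrite /Pm /Qm -scalerDr addrC addrA subrK -scalerBl -rmorphB -/d scalerA.
  by rewrite -rmorphM (mulVf dn0) rmorph1 scale1r.
have hPQA : al%:C *: Pm + be%:C *: Qm = B.
  rewrite /Pm /Qm; apply/matrixP => i j; rewrite !mxE.
  rewrite fmorphV; move: dC; rewrite /d rmorphB => dC.
  by field.
clearbody Pm Qm.
pose Phi := fun X : 'M[R[i]]_n => qf X u' *: Pm + qf X w' *: Qm.
have qfD : forall (X Y : 'M[R[i]]_n) v, qf (X + Y) v = qf X v + qf Y v.
  by move=> X Y v; rewrite /qf bilDm.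
have qfZ : forall c (X : 'M[R[i]]_n) v, qf (c *: X) v = c * qf X v.
  by move=> c X v; rewrite /qf bilZm.
have hPU : PU Phi.
  split.
  - by move=> X Y _ _; rewrite /Phi !qfD !scalerDl addrACA.
  - move=> r X _; rewrite /Phi.
    by rewrite !qfZ scalerDr !scalerA.
  - move=> X hX; rewrite /Phi /is_herm adjmxD !adjmxZ (proj1 hPm) (proj1 hQm).
    by rewrite /qf !(bil_conj _ _ hX).
  - move=> X hX; split.
      rewrite /Phi /is_herm adjmxD !adjmxZ (proj1 hPm) (proj1 hQm).
      by rewrite /qf !(bil_conj _ _ (proj1 hX)).
    move=> v; rewrite -/(bil _ v v) bilDm !bilZm.
    apply: addr_ge0; apply: mulr_ge0.
    + exact: (proj2 hX).
    + exact: (proj2 hPm).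
    + exact: (proj2 hX).
    + exact: (proj2 hQm).
  - by rewrite /Phi !qf1 u'1 w'1 rmorph1 !scale1r hPQ1.
have PhiA : Phi A = B.
  by rewrite /Phi (qf_real u' hA) (qf_real w' hA) -/al -/be hPQA.
have := hmu n k Phi hPU A hA.
by rewrite PhiA.
Qed.
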